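(* Let $\mathbf L=(L,\le,\wedge,\vee,0,1,\nu)$ be a bounded lattice with a minimal quasi-complementation operator and let $(X,\parallel,Y,S_\vee)$ be its canonical frame. Then $(X_a)^*=X_{\nu a}$ for every $a\in L$, and the map $a\mapsto X_a$ is an isomorphism of quasi-complemented lattices from $\mathbf L$ onto $(\mathtt{KO}\mathcal G(\mathfrak X),\subseteq,\cap,\vee,\emptyset,X,(\cdot)^* )$.
   Context: A minimal quasi-complementation operator on a bounded lattice is an antitone operation $\nu$ with $\nu 0=1$ and $\nu(a\vee b)=\nu a\wedge\nu b$. Canonical frame: $X$ the proper filters of $\mathbf L$, $Y$ the proper ideals, $x\parallel y$ iff $x\cap y\neq\emptyset$; $\widehat\nu(x)$ is the ideal generated by $\{\nu a:a\in x\}$; $yS_\vee x$ iff $\widehat\nu(x)\subseteq y$ (equivalently, $a\in x$ implies $\nu a\in y$ for all $a$). $X_a=\{x\in X:a\in x\}$; $\mathfrak X$ is $X$ with the topology generated by $\{X_a\}$. For $U\subseteq X$, $U'=\{y:\forall x\in U\;x\parallel y\}$; for $V\subseteq Y$, $V'=\{x:\forall y\in V\;x\parallel y\}$; $\mathtt{KO}\mathcal G(\mathfrak X)$ is the set of compact-open subsets $A$ of $\mathfrak X$ with $A=A''$, with join $A\vee C=(A\cup C)''$. Incompatibility: $x\perp z$ iff $\forall y(yS_\vee z\Rightarrow x\parallel y)$ (equivalently, some $e\in z$ has $\nu e\in x$); $A^*=\{x:\forall z\in A\;x\perp z\}$. *)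

(* Defs.v *)
From Stdlib Require List.
From mathcomp Require Import all_boot all_order.
Import Order.Theory.
Set Implicit Arguments. Unset Strict Implicit. Unset Printing Implicit Defensive.
Local Open Scope order_scope.

Section Frame.
Context {disp : Order.disp_t} {L : tbLatticeType disp}.

Definition is_mqc (nu : L -> L) : Prop :=
  (forall a b, a <= b -> nu b <= nu a) /\ nu \bot = \top /\
  (forall a b, nu (a `|` b) = nu a `&` nu b).

Definition is_filter (x : L -> Prop) : Prop :=
  (exists a, x a) /\ (forall a b, x a -> a <= b -> x b) /\
  (forall a b, x a -> x b -> x (a `&` b)).
Definition proper_filter (x : L -> Prop) : Prop := is_filter x /\ ~ x \bot.

Definition is_ideal (y : L -> Prop) : Prop :=
  (exists a, y a) /\ (forall a b, y b -> a <= b -> y a) /\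
  (forall a b, y a -> y b -> y (a `|` b)).
Definition proper_ideal (y : L -> Prop) : Prop := is_ideal y /\ ~ y \top.

(** X = proper filters, Y = proper ideals. *)
Definition filt := {x : L -> Prop | proper_filter x}.
Definition idl := {y : L -> Prop | proper_ideal y}.

Definition compat (x : filt) (y : idl) : Prop :=
  exists a, proj1_sig x a /\ proj1_sig y a.

Definition Xa (a : L) : filt -> Prop := fun x => proj1_sig x a.

Definition ideal_gen (S : L -> Prop) : L -> Prop :=
  fun b => forall y, is_ideal y -> (forall a, S a -> y a) -> y b.

Definition nu_hat (nu : L -> L) (x : filt) : L -> Prop :=
  ideal_gen (fun c => exists a, proj1_sig x a /\ c = nu a).

Definition Svee (nu : L -> L) (y : idl) (x : filt) : Prop :=
  forall b, nu_hat nu x b -> proj1_sig y b.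

Definition perp (nu : L -> L) (x z : filt) : Prop :=
  forall y, Svee nu y z -> compat x y.

Definition star (nu : L -> L) (A : filt -> Prop) : filt -> Prop :=
  fun x => forall z, A z -> perp nu x z.

Definition primeU (U : filt -> Prop) : idl -> Prop :=
  fun y => forall x, U x -> compat x y.
Definition primeV (V : idl -> Prop) : filt -> Prop :=
  fun x => forall y, V y -> compat x y.

Definition galois_closed (A : filt -> Prop) : Prop := A = primeV (primeU A).

Definition joinG (A C : filt -> Prop) : filt -> Prop :=
  primeV (primeU (fun x => A x \/ C x)).

(** Open sets of the topology on X generated by the subbasis {X_a : a in L}:
    unions of finite intersections of subbasic sets. *)
Definition opn (U : filt -> Prop) : Prop :=
  forall x, U x -> exists s : seq L,
    (forall a, a \in s -> Xa a x) /\
    (forall z, (forall a, a \in s -> Xa a z) -> U z).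

Definition compact (A : filt -> Prop) : Prop :=
  forall (I : Type) (U : I -> filt -> Prop),
    (forall i, opn (U i)) -> (forall x, A x -> exists i, U i x) ->
    exists s : list I, forall x, A x -> exists i, Stdlib.Lists.List.In i s /\ U i x.

Definition KOG (A : filt -> Prop) : Prop := opn A /\ compact A /\ galois_closed A.

End Frame.

(* Main.v *)
Require Import Defs.
From mathcomp Require Import all_boot all_order.
From Stdlib Require Import FunctionalExtensionality PropExtensionality Classical.
Import Order.Theory.
Local Open Scope order_scope.
Set Implicit Arguments. Unset Strict Implicit.

Section S.
Context {disp : Order.disp_t} {L : tbLatticeType disp}.
Local Notation F := (@filt disp L).
Local Notation I := (@idl disp L).

Lemma pext (T : Type) (P Q : T -> Prop) : (forall x, P x <-> Q x) -> P = Q.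
Proof. move=> H; apply: functional_extensionality => x; apply: propositional_extensionality; exact: H. Qed.

Lemma filt_up (x : F) (a b : L) : proj1_sig x a -> a <= b -> proj1_sig x b.
Proof. destruct x as [x [[e [up m]] nb]]; exact: up. Qed.
Lemma filt_meet (x : F) (a b : L) : proj1_sig x a -> proj1_sig x b -> proj1_sig x (a `&` b).
Proof. destruct x as [x [[e [up m]] nb]]; exact: m. Qed.
Lemma filt_top (x : F) : proj1_sig x \top.
Proof. destruct x as [x [[[a xa] [up m]] nb]]; exact: (up a \top xa (lex1 a)). Qed.
Lemma filt_nbot (x : F) : ~ proj1_sig x \bot.
Proof. by destruct x as [x [f h]]. Qed.
Lemma idl_down (y : I) (a b : L) : proj1_sig y b -> a <= b -> proj1_sig y a.
Proof. destruct y as [y [[e [d m]] nb]]; exact: d. Qed.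
Lemma idl_join (y : I) (a b : L) : proj1_sig y a -> proj1_sig y b -> proj1_sig y (a `|` b).
Proof. destruct y as [y [[e [d m]] nb]]; exact: m. Qed.
Lemma idl_bot (y : I) : proj1_sig y \bot.
Proof. destruct y as [y [[[a ya] [d m]] nt]]; exact: (d \bot a ya (le0x a)). Qed.


Lemma pf_proper (a : L) : a <> \bot -> proper_filter (fun b => a <= b).
Proof.
move=> ha; split.
  split; first by exists a.
  split; first by move=> b c ab bc; exact: le_trans ab bc.
  by move=> b c ab ac; rewrite lexI ab ac.
by move=> h; apply: ha; apply/eqP; rewrite eq_le h le0x.
Qed.
Definition pf (a : L) (h : a <> \bot) : F := exist _ _ (pf_proper h).

Lemma pi_proper (c : L) : c <> \top -> proper_ideal (fun b => b <= c).
Proof.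
move=> hc; split.
  split; first by exists c.
  split; first by move=> b d dc bd; exact: le_trans bd dc.
  by move=> b d bc dc; rewrite leUx bc dc.
by move=> h; apply: hc; apply/eqP; rewrite eq_le h lex1.
Qed.
Definition pi (c : L) (h : c <> \top) : I := exist _ _ (pi_proper h).

Lemma Hlem (y : I) (c : L) : primeU (Xa c) y -> proj1_sig y c.
Proof.
case: (classic (c = \bot)) => [->|hc]; first by move=> _; exact: idl_bot.
move=> hy; case: (hy (pf hc) (lexx c)) => e [/= ce ye]; exact: idl_down ye ce.
Qed.

Lemma Glem (x : F) (c : L) : (forall y : I, proj1_sig y c -> compat x y) -> proj1_sig x c.
Proof.
case: (classic (c = \top)) => [->|hc] h; first exact: filt_top.
case: (h (pi hc) (lexx c)) => e [xe /= ec]; exact: filt_up xe ec.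
Qed.

Lemma Klem (P : F -> Prop) (c : L) : (forall z, P z -> Xa c z) ->
  (forall y, primeU P y -> proj1_sig y c) -> Xa c = primeV (primeU P).
Proof.
move=> h1 h2; apply: pext => x; split.
- move=> xc y hy; exists c; split => //; exact: h2.
- move=> hx; apply: Glem => y yc; apply: hx => z pz; exists c; split => //; exact: h1.
Qed.

Lemma meet_le (s : seq L) (a : L) : a \in s -> foldr Order.meet \top s <= a.
Proof.
elim: s => [//|b s IH]; rewrite inE => /orP [/eqP ->|h] /=; first exact: leIl.
exact: le_trans (leIr _ _) (IH h).
Qed.

Lemma filt_foldr (x : F) (s : seq L) : (forall a, a \in s -> proj1_sig x a) ->
  proj1_sig x (foldr Order.meet \top s).
Proof.
elim: s => [_|b s IH h] /=; first exact: filt_top.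
apply: filt_meet; first by apply: h; exact: mem_head.
apply: IH => a ha; apply: h; by rewrite inE ha orbT.
Qed.

Lemma join_le (T : Type) (f : T -> L) (s : list T) (i : T) :
  List.In i s -> f i <= foldr Order.join \bot (map f s).
Proof.
elim: s => [//|j s IH] /= [<-|h]; first exact: leUl.
exact: le_trans (IH h) (leUr _ _).
Qed.

Lemma idl_foldr (T : Type) (f : T -> L) (s : list T) (y : I) :
  (forall i, List.In i s -> proj1_sig y (f i)) -> proj1_sig y (foldr Order.join \bot (map f s)).
Proof.
elim: s => [_|j s IH h] /=; first exact: idl_bot.
apply: idl_join; first by apply: h; left.
apply: IH => i hi; apply: h; by right.
Qed.

End S.
Unset Implicit Arguments.

Theorem lemma5p2 (disp : Order.disp_t) (L : tbLatticeType disp) (nu : L -> L)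
  (hnu : is_mqc nu) :
  (* (X_a)^* = X_{nu a} *)
  (forall a : L, star nu (Xa a) = Xa (nu a)) /\
  (* a |-> X_a maps L into KOG(X) ... *)
  (forall a : L, KOG (Xa a)) /\
  (* ... onto KOG(X) ... *)
  (forall A : filt -> Prop, KOG A -> exists a : L, A = Xa a) /\
  (* ... injectively, as an order embedding ... *)
  (forall a b : L, Xa a = Xa b -> a = b) /\
  (forall a b : L, a <= b <-> (forall x, Xa a x -> Xa b x)) /\
  (* ... preserving meet, join, bottom, top and the quasi-complement *)
  (forall a b : L, Xa (a `&` b) = (fun x => Xa a x /\ Xa b x)) /\
  (forall a b : L, Xa (a `|` b) = joinG (Xa a) (Xa b)) /\
  Xa (\bot : L) = (fun _ => False) /\
  Xa (\top : L) = (fun _ => True) /\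
  (forall a : L, Xa (nu a) = star nu (Xa a)).
Proof.
case: hnu => [anti [nu0 _]].
have hstar : forall a : L, star nu (Xa a) = Xa (nu a).
  move=> a; apply: pext => x; split.
  - move=> hx; case: (classic (a = \bot)) => [->|ha].
      rewrite /Xa nu0; exact: filt_top.
    have hp := hx (pf ha) (lexx a).
    case: (classic (nu a = \top)) => [e|hna]; first by rewrite /Xa e; exact: filt_top.
    case: (hp (pi hna)).
      move=> b hb; apply: hb; first exact: (pi_proper hna).1.
      by move=> c [e [/= ae ->]]; exact: anti ae.
    move=> e [xe /= ena]; exact: filt_up xe ena.
  - move=> hx z za y hy; exists (nu a); split => //.
    apply: hy => y' _ hgen; apply: hgen; by exists a.
have hle : forall a b : L, a <= b <-> (forall x, Xa a x -> Xa b x).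
  move=> a b; split; first by move=> ab x xa; exact: filt_up xa ab.
  case: (classic (a = \bot)) => [-> _|ha h]; first exact: le0x.
  exact: (h (pf ha) (lexx a)).
split; first exact: hstar.
split.
  move=> a; split.
    move=> x xa; exists [:: a]; split.
      by move=> b; rewrite inE => /eqP ->.
    move=> z hz; apply: hz; exact: mem_head.
  split.
    move=> T U hU hcov.
    case: (classic (a = \bot)) => [ha|ha].
      exists nil => x; rewrite /Xa ha => hx; exfalso; exact: filt_nbot hx.
    case: (hcov (pf ha) (lexx a)) => i hi.
    case: (hU i _ hi) => s [hs1 hs2].
    exists (i :: nil) => x xa; exists i; split; first by left.
    apply: hs2 => b hb; apply: filt_up xa _; exact: (hs1 b hb).
  exact: (Klem (fun z h => h) (fun y h => Hlem h)).
split.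
  move=> A [hopen [hcomp hgal]].
  pose Ity := {b : L | forall z, Xa b z -> A z}.
  have h1 : forall i : Ity, opn (Xa (proj1_sig i)).
      move=> i x xi; exists [:: proj1_sig i]; split.
        by move=> b; rewrite inE => /eqP ->.
      move=> z hz; apply: hz; exact: mem_head.
  have h2 : forall x, A x -> exists i : Ity, Xa (proj1_sig i) x.
      move=> x Ax; case: (hopen x Ax) => s [hs1 hs2].
      have pr : forall z, Xa (foldr Order.meet \top s) z -> A z.
        move=> z hz; apply: hs2 => b hb; apply: filt_up hz (meet_le hb).
      exists (exist _ _ pr); exact: filt_foldr hs1.
  have [ss hss] := hcomp Ity (fun i => Xa (proj1_sig i)) h1 h2.
  exists (foldr Order.join \bot (map (@proj1_sig _ _) ss)).
  rewrite {1}hgal; symmetry; apply: Klem.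
  - move=> z Az; case: (hss z Az) => i [ini zi]; apply: filt_up zi _.
    exact: (join_le (@proj1_sig _ _) ini).
  - move=> y hy; apply: idl_foldr => i _; apply: Hlem => z zi.
    apply: hy; exact: (proj2_sig i z zi).
split.
  move=> a b e; apply/eqP; rewrite eq_le.
  by rewrite (proj2 (hle a b)) ?(proj2 (hle b a)) // => x; rewrite e.
split; first exact: hle.
split.
  move=> a b; apply: pext => x; split.
    by move=> h; split; apply: filt_up h _; [exact: leIl | exact: leIr].
  by case; exact: filt_meet.
split.
  move=> a b; rewrite /joinG; apply: Klem.
    by move=> z [za|zb]; [exact: (filt_up za (leUl a b)) | exact: (filt_up zb (leUr _ _))].
  move=> y hy; apply: idl_join; apply: Hlem => z hz; apply: hy; by [left|right].
split; first by apply: pext => x; split => // h; exact: filt_nbot h.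
split; first by apply: pext => x; split => // _; exact: filt_top.
by move=> a; rewrite hstar.
Qed.
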